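(* Let $\alpha>0$, $y_0\in\mathrm{dom}\, h$, $\{x_i\}_{i=0}^{k-1}\subseteq\mathrm{dom}\, h$ and $\zeta\in[0,1]^k$, and let $\Gamma_k$ be the ACP model induced by $(y_0,\{x_i\}_{i=0}^{k-1},\zeta)$. Then: (a) $\Gamma_k(x)\leq\phi^\alpha(x)$ for all $x\in\mathrm{dom}\, h$; (b) $\Gamma_k$ is $\alpha$-strongly convex. Furthermore, define $s_0=\nabla f(y_0)$ and $s_{j+1}=(1-\zeta_j)s_j+\zeta_j\nabla f(x_j)$ for $0\leq j\leq k-1$. Then (c) for all $u\in\mathrm{dom}\, h$, $\phi^\alpha(u)+\psi^\alpha(s_k)\leq \phi^\alpha(u)-\min_{x\in\mathbb{R}^n}\Gamma_k(x)$.
   Context: Let $\|\cdot\|$ be a norm on $\mathbb{R}^n$ with dual norm $\|\cdot\|_*$. Let $f:\mathbb{R}^n\to\mathbb{R}$ be convex, differentiable and $L$-smooth ($L>0$) with respect to $\|\cdot\|$, $h:\mathbb{R}^n\to(-\infty,\infty]$ closed proper convex with bounded domain, and $w:\mathbb{R}^n\to[0,+\infty]$ closed, $1$-strongly convex with respect to $\|\cdot\|$ on $\mathrm{dom}\, h$, with $\max_{\mathrm{dom}\, h}w<\infty$. For $\alpha>0$ let $h^\alpha=h+\alpha w$, $\phi^\alpha=f+h^\alpha$, $\psi^\alpha(z)=(h^\alpha)^*(-z)+f^*(z)$ ($^*$ = convex conjugate). Write $\ell_f(x;x_0)=f(x_0)+\langle\nabla f(x_0),x-x_0\rangle$. The ACP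 (aggregated cutting plane) model induced by $(y_0,\{x_i\}_{i=0}^{k-1},\zeta)$ is $\Gamma_k$ defined recursively by $\Gamma_0(x)=h^\alpha(x)+\ell_f(x;y_0)$ and $\Gamma_{j+1}(x)=(1-\zeta_j)\Gamma_j(x)+\zeta_j(h^\alpha(x)+\ell_f(x;x_j))$ for $0\le j\le k-1$. *)

(* Defs.v *)
From HB Require Import structures.
From mathcomp Require Import all_boot all_order all_algebra.
From mathcomp Require Import all_classical all_reals all_analysis.
Set Implicit Arguments. Unset Strict Implicit. Unset Printing Implicit Defensive.
Import Order.TTheory GRing.Theory Num.Theory.
Import numFieldNormedType.Exports.
Local Open Scope classical_set_scope.
Local Open Scope ring_scope.

Section Defs.
Variables (R : realType) (n : nat).
Notation V := 'rV[R]_n.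

Definition dotp (x y : V) : R := \sum_(i < n) x 0 i * y 0 i.

Definition is_norm (N : V -> R) : Prop :=
  [/\ forall x, N x = 0 -> x = 0,
      forall (a : R) x, N (a *: x) = `|a| * N x &
      forall x y, N (x + y) <= N x + N y].

Definition dual_norm (N : V -> R) (s : V) : R :=
  sup [set dotp s x | x in [set x | N x <= 1]].

Definition grad (f : V -> R) (x : V) : V :=
  \row_(i < n) ('d f x) (delta_mx 0 i).

Definition convex_fun (f : V -> R) : Prop :=
  forall x y (t : R), 0 <= t <= 1 ->
    f (t *: x + (1 - t) *: y) <= t * f x + (1 - t) * f y.

Definition smooth_wrt (N : V -> R) (L : R) (f : V -> R) : Prop :=
  forall x y, dual_norm N (grad f x - grad f y) <= L * N (x - y).

Definition dom (g : V -> \bar R) : set V := [set x | (g x < +oo)%E].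

Definition proper_fun (g : V -> \bar R) : Prop :=
  (forall x, g x != -oo%E) /\ dom g !=set0.

Definition closed_fun (g : V -> \bar R) : Prop :=
  closed [set p : V * R | (g p.1 <= p.2%:E)%E].

Definition strongly_convex_on (D : set V) (N : V -> R) (mu : R)
    (g : V -> \bar R) : Prop :=
  forall x y (t : R), D x -> D y -> 0 < t < 1 ->
    (g (t *: x + (1 - t) *: y)%R <=
       t%:E * g x + (1 - t)%:E * g y
       - (mu / 2 * t * (1 - t) * N (x - y) ^+ 2)%:E)%E.

Definition convex_efun (g : V -> \bar R) : Prop :=
  forall x y (t : R), 0 < t < 1 ->
    (g (t *: x + (1 - t) *: y)%R <= t%:E * g x + (1 - t)%:E * g y)%E.

Definition bounded_set_wrt (N : V -> R) (D : set V) : Prop :=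
  exists M : R, forall x, D x -> N x <= M.

Definition conj (g : V -> \bar R) (z : V) : \bar R :=
  ereal_sup [set ((dotp z x)%:E - g x)%E | x in [set: V]].

Definition h_alpha (h w : V -> \bar R) (alpha : R) (x : V) : \bar R :=
  (h x + alpha%:E * w x)%E.

Definition phi_alpha (f : V -> R) (h w : V -> \bar R) (alpha : R) (x : V)
  : \bar R := ((f x)%:E + h_alpha h w alpha x)%E.

Definition psi_alpha (f : V -> R) (h w : V -> \bar R) (alpha : R) (z : V)
  : \bar R :=
  (conj (h_alpha h w alpha) (- z) + conj (fun x => (f x)%:E) z)%E.

Definition lin (f : V -> R) (x x0 : V) : R :=
  f x0 + dotp (grad f x0) (x - x0).

Fixpoint ACP (f : V -> R) (h w : V -> \bar R) (alpha : R) (y0 : V)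
    (xs : nat -> V) (zeta : nat -> R) (j : nat) : V -> \bar R :=
  match j with
  | 0 => fun x => (h_alpha h w alpha x + (lin f x y0)%:E)%E
  | j'.+1 => fun x =>
      ((1 - zeta j')%:E * ACP f h w alpha y0 xs zeta j' x
       + (zeta j')%:E * (h_alpha h w alpha x + (lin f x (xs j'))%:E))%E
  end.

Fixpoint agg_grad (f : V -> R) (y0 : V) (xs : nat -> V) (zeta : nat -> R)
    (j : nat) : V :=
  match j with
  | 0 => grad f y0
  | j'.+1 => (1 - zeta j') *: agg_grad f y0 xs zeta j'
             + zeta j' *: grad f (xs j')
  end.

End Defs.

(* Main.v *)
Require Import Defs.
From HB Require Import structures.
From mathcomp Require Import all_boot all_order all_algebra.
From mathcomp Require Import all_classical all_reals all_analysis.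
From mathcomp Require Import lra ring.
Import Order.TTheory GRing.Theory Num.Theory.
Import numFieldNormedType.Exports.
Local Open Scope classical_set_scope.
Local Open Scope ring_scope.

Section Helpers.
Variables (R : realType) (n : nat).
Notation V := 'rV[R]_n.

Lemma dotpDl (x y z : V) : dotp (x + y) z = dotp x z + dotp y z.
Proof. by rewrite /dotp -big_split; apply: eq_bigr => i _; rewrite mxE mulrDl. Qed.
Lemma dotpZl a (x z : V) : dotp (a *: x) z = a * dotp x z.
Proof. by rewrite /dotp mulr_sumr; apply: eq_bigr => i _; rewrite mxE mulrA. Qed.
Lemma dotpDr (x y z : V) : dotp z (x + y) = dotp z x + dotp z y.
Proof. by rewrite /dotp -big_split; apply: eq_bigr => i _; rewrite mxE mulrDr. Qed.
Lemma dotpZr a (x z : V) : dotp z (a *: x) = a * dotp z x.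
Proof. by rewrite /dotp mulr_sumr; apply: eq_bigr => i _; rewrite mxE mulrCA. Qed.
Lemma dotpNl (x z : V) : dotp (- x) z = - dotp x z.
Proof. by rewrite -scaleN1r dotpZl mulN1r. Qed.
Lemma dotpNr (x z : V) : dotp z (- x) = - dotp z x.
Proof. by rewrite -scaleN1r dotpZr mulN1r. Qed.
Lemma dotpBr (x y z : V) : dotp z (x - y) = dotp z x - dotp z y.
Proof. by rewrite dotpDr dotpNr. Qed.
Lemma dotp0r (z : V) : dotp z 0 = 0.
Proof. by rewrite -(scale0r (0 : V)) dotpZr mul0r. Qed.

Lemma dotp_grad (f : V -> R) y v : dotp (grad f y) v = 'd f y v.
Proof.
rewrite /dotp /grad [in RHS](row_sum_delta v) linear_sum.
apply: eq_bigr => i _; rewrite mxE linearZ /= mulrC //.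
Qed.

Lemma grad_ineq (f : V -> R) x y : (forall z, differentiable f z) ->
  convex_fun f -> lin f x y <= f x.
Proof.
move=> Hd Hc; rewrite /lin dotp_grad -deriveE //.
set v := x - y.
suff H : 'D_v f y <= f x - f y by lra.
rewrite leNgt; apply/negP => Dlt.
pose g := fun t : R => t^-1 *: ((f \o shift y) (t *: v) - f y).
have Hc' : g @ 0^' --> 'D_v f y := diff_derivable (v:=v) (Hd y).
have H1 : \forall t \near 0^', f x - f y < g t := @cvgr_gt _ _ _ (dnbhs_filter (0:R)) g _ Hc' _ Dlt.
have H2 : \forall t \near 0^'+, f x - f y < g t.
  have sub : (fun t : R => 0 < t) `<=` (fun t : R => t != 0) by move=> t /= t0; exact: lt0r_neq0.
  exact: (within_subset (nbhs_filter (0:R)) sub H1).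
have /filter_ex [t [[t0 t1] zt]] : \forall t \near 0^'+, (0 < t /\ t < 1) /\ f x - f y < g t.
  near=> t; split; [split|]; near: t; [exact: nbhs_right_gt | exact: nbhs_right_lt | exact: H2].
move: zt; rewrite /g /=.
have -> : t *: v + y = t *: x + (1 - t) *: y.
  by rewrite /v scalerBr scalerBl scale1r addrAC addrA.
have := Hc x y t; rewrite (ltW t0) (ltW (t1 : t < 1)) => /(_ isT) Hct.
have tV : t * t^-1 = 1 by rewrite mulfV // lt0r_neq0.
have tV0 : 0 < t^-1 by rewrite invr_gt0.
change ((f x - f y < t^-1 * (f (t *: x + (1 - t) *: y) - f y)) -> False).
move: Hct; set A := f (t *: x + (1 - t) *: y) => Hct.
have K : t^-1 * (A - f y) <= t^-1 * (t * (f x - f y)).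
  by apply: ler_wpM2l; [exact: ltW | lra].
rewrite mulrA mulVf ?lt0r_neq0 // mul1r in K.
lra.
Unshelve. all: by end_near.
Qed.

Lemma addNy_ge0 (a b : \bar R) : a != -oo%E -> (0 <= b)%E -> (a + b != -oo)%E.
Proof. by case: a => [a| |] // _; case: b. Qed.

Lemma ge0_Nny (a : \bar R) : (0 <= a)%E -> a != -oo%E.
Proof. by case: a. Qed.

Variables (f : V -> R) (h w : V -> \bar R) (alpha : R) (y0 : V)
  (xs : nat -> V) (zeta : nat -> R).

Fixpoint Aff (j : nat) (x : V) : R :=
  match j with
  | 0 => lin f x y0
  | j'.+1 => (1 - zeta j') * Aff j' x + zeta j' * lin f x (xs j')
  end.

Lemma ACP_rep j x : (forall x, h x != -oo%E) -> (forall x, (0 <= w x)%E) -> 0 <= alpha ->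
  (forall i, (i < j)%N -> 0 <= zeta i <= 1) ->
  ACP f h w alpha y0 xs zeta j x = (h_alpha h w alpha x + (Aff j x)%:E)%E.
Proof.
move=> hN w0 a0; elim: j => [|j IH] Hz //=.
rewrite IH; last by move=> i ij; apply: Hz; exact: leqW.
have /andP [z0 z1] := Hz j (ltnSn j).
have : h_alpha h w alpha x != -oo%E.
  by apply: addNy_ge0 => //; apply: mule_ge0 => //; rewrite lee_fin.
case: (h_alpha h w alpha x) => [r| |] // _.
  by rewrite -!EFinD; congr (_%:E); ring.
rewrite !addye //.
have [->|zn0] := eqVneq (zeta j) 0.
  by rewrite subr0 mul0e adde0 muleC gt0_mulye // lte_fin.
have zpos : 0 < zeta j by rewrite lt0r zn0.
rewrite [((zeta j)%:E * _)%E]muleC gt0_mulye ?lte_fin // addey //.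
by apply: ge0_Nny; apply: mule_ge0 => //; rewrite lee_fin subr_ge0.
Qed.

Hypothesis Hd : forall z, differentiable f z.
Hypothesis Hcf : convex_fun f.

Lemma Aff_le j x : (forall i, (i < j)%N -> 0 <= zeta i <= 1) -> Aff j x <= f x.
Proof.
elim: j => [|j IH] Hz /=; first exact: grad_ineq.
have := IH (fun i ij => Hz i (leqW ij)).
have := grad_ineq f x (xs j) Hd Hcf.
have /andP [z0 z1] := Hz j (ltnSn j).
move=> Hb Ha.
have K1 : (1 - zeta j) * Aff j x <= (1 - zeta j) * f x by apply: ler_wpM2l => //; lra.
have K2 : zeta j * lin f x (xs j) <= zeta j * f x by apply: ler_wpM2l.
lra.
Qed.

Lemma lin_aff x y : lin f x y = dotp (grad f y) x + lin f 0 y.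
Proof. rewrite /lin !dotpBr dotp0r; ring. Qed.

Lemma Aff_aff j x : Aff j x = dotp (agg_grad f y0 xs zeta j) x + Aff j 0.
Proof.
elim: j => [|j IH] /=; first exact: lin_aff.
by rewrite IH (lin_aff x (xs j)) dotpDl !dotpZl; ring.
Qed.

Lemma mulNy_pos (a : R) (e : \bar R) : 0 < a -> e != -oo%E -> (a%:E * e != -oo)%E.
Proof. by move=> a0; case: e => [r| |] //= _; rewrite muleC gt0_mulye ?lte_fin. Qed.

End Helpers.



Theorem lemma2p3 (R : realType) (n : nat) (N : 'rV[R]_n -> R)
  (f : 'rV[R]_n -> R) (h w : 'rV[R]_n -> \bar R) (L alpha : R)
  (y0 : 'rV[R]_n) (xs : nat -> 'rV[R]_n) (zeta : nat -> R) (k : nat) :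
  is_norm N ->
  (forall x, differentiable f x) -> convex_fun f -> 0 < L -> smooth_wrt N L f ->
  proper_fun h -> convex_efun h -> closed_fun h -> bounded_set_wrt N (dom h) ->
  (forall x, (0 <= w x)%E) -> closed_fun w ->
  strongly_convex_on (dom h) N 1 w ->
  (exists M : R, forall x, dom h x -> (w x <= M%:E)%E) ->
  0 < alpha ->
  dom h y0 ->
  (forall i, (i < k)%N -> dom h (xs i)) ->
  (forall i, (i < k)%N -> 0 <= zeta i <= 1) ->
  [/\ (forall x, dom h x ->
         (ACP f h w alpha y0 xs zeta k x <= phi_alpha f h w alpha x)%E),
      strongly_convex_on [set: 'rV[R]_n] N alpha (ACP f h w alpha y0 xs zeta k) &
      (forall u, dom h u ->
         (phi_alpha f h w alpha u + psi_alpha f h w alpha (agg_grad f y0 xs zeta k)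
          <= phi_alpha f h w alpha u
             - ereal_inf (range (ACP f h w alpha y0 xs zeta k)))%E)].

Proof.
move=> HN Hd Hcf L0 Hsm [hN hne] Hch _ _ w0 _ Hsw [M HM] a0 hy0 hxs Hz.
pose G := ACP f h w alpha y0 xs zeta k.
pose A := Aff R n f y0 xs zeta k.
pose s := agg_grad f y0 xs zeta k.
pose c := A 0.
have rep : forall x, G x = (h_alpha h w alpha x + (A x)%:E)%E :=
  fun x => @ACP_rep R n f h w alpha y0 xs zeta k x hN w0 (ltW a0) Hz.
have Ale : forall x, A x <= f x := fun x => @Aff_le R n f y0 xs zeta Hd Hcf k x Hz.
have Aaff : forall x, A x = dotp s x + c := @Aff_aff R n f y0 xs zeta k.
have hfin : forall x, dom h x -> exists hx wx, h x = hx%:E /\ w x = wx%:E.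
  move=> x; rewrite /dom /= => hx.
  have wle := HM x hx.
  move: (hN x) hx (w0 x) wle; case: (h x) => [r| |] // _ _.
  by case: (w x) => [q| |] //= _ _; exists r, q.
have hnd : forall x, ~ dom h x -> h x = +oo%E.
  move=> x; rewrite /dom /=; move: (hN x); case: (h x) => [r| |] //= _ H.
  by exfalso; apply: H; rewrite ltey.
have waN : forall x, (alpha%:E * w x != -oo)%E.
  by move=> x; apply: ge0_Nny; apply: mule_ge0 => //; rewrite lee_fin ltW.
have haN : forall x, h_alpha h w alpha x != -oo%E.
  by move=> x; apply: addNy_ge0 => //; apply: mule_ge0 => //; rewrite lee_fin ltW.
have GN : forall x, G x != -oo%E.
  by move=> x; rewrite rep; move: (haN x); case: (h_alpha h w alpha x).
have Gy : forall x, ~ dom h x -> G x = +oo%E.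
  by move=> x hx; rewrite rep /h_alpha hnd // !addye.
split.
- move=> x _; rewrite -/G rep /phi_alpha [X in (_ <= X)%E]addeC.
  by apply: leeD2l; rewrite lee_fin.
- move=> x y t _ _ tt; have /andP [t0 t1] := tt.
  have t1' : 0 < 1 - t by rewrite subr_gt0.
  case: (pselect (dom h x)) => hx; last first.
    rewrite -/G (Gy x hx) [(t%:E * _)%E]muleC gt0_mulye ?lte_fin // addye.
      by rewrite addye ?leey.
    exact: mulNy_pos.
  case: (pselect (dom h y)) => hy; last first.
    rewrite -/G (Gy y hy) [((1 - t)%:E * _)%E]muleC gt0_mulye ?lte_fin // addey.
      by rewrite addye ?leey.
    exact: mulNy_pos.
  pose z := t *: x + (1 - t) *: y.
  have Hh := Hch x y t tt.
  have Hw := Hsw x y t hx hy tt.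
  have [hx' [wx' [Ehx Ewx]]] := hfin x hx.
  have [hy' [wy' [Ehy Ewy]]] := hfin y hy.
  rewrite Ehx Ehy /= in Hh.
  have hz : dom h z.
    by rewrite /dom /=; apply: (le_lt_trans Hh); rewrite ltey.
  have [hz' [wz' [Ehz Ewz]]] := hfin z hz.
  rewrite -/z Ehz in Hh; rewrite Ewx Ewy -/z Ewz /= in Hw.
  rewrite -/G !rep /h_alpha -/z Ehx Ehy Ehz Ewx Ewy Ewz /=.
  have Az : A z = t * A x + (1 - t) * A y by rewrite !Aaff /z dotpDr !dotpZr; ring.
  move: Hh Hw; rewrite -?EFinM -?EFinD -?EFinM -?EFinD -?EFinM -?EFinD !lee_fin => Hh Hw.
  have Hw' := ler_wpM2l (ltW a0) Hw.
  rewrite Az; lra.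
- move=> u hu.
  have [hu' [wu' [Ehu Ewu]]] := hfin u hu.
  rewrite /phi_alpha /h_alpha Ehu Ewu /= -/G -/s.
  apply: leeD2l.
  rewrite /psi_alpha.
  have C1 : (conj (fun x => (f x)%:E) s <= (- c)%:E)%E.
    apply: ge_ereal_sup => _ [x _ <-].
    rewrite -EFinB lee_fin; have := Ale x; rewrite Aaff; lra.
  have C2 : (conj (h_alpha h w alpha) (- s) <= c%:E - ereal_inf (range G))%E.
    apply: ge_ereal_sup => _ [x _ <-].
    have Ginf : (ereal_inf (range G) <= G x)%E by apply: ereal_inf_lbound; exists x.
    move: Ginf (haN x); rewrite rep; case: (h_alpha h w alpha x) => [r| |] //= Ginf _.
    have -> : ((dotp (- s) x)%:E + (- r)%:E = c%:E - (r + A x)%:E)%E.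
      by rewrite -EFinD -EFinB dotpNl Aaff; congr (_%:E); ring.
      by apply: leeD2l; rewrite leeN2; exact: Ginf.
    by rewrite addeNy leNye.
  apply: (le_trans (leeD C2 C1)).
  by rewrite addeAC -EFinD subrr add0e.
Qed.
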